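(* Let $\widetilde{\Sigma}_1,\ldots,\widetilde{\Sigma}_n$ be pairwise disjoint visibly pushdown alphabets and $\widetilde{\Sigma}=\widetilde{\Sigma}_1\uplus\cdots\uplus\widetilde{\Sigma}_n$. If $L_i\subseteq\widetilde{\Sigma}_i^*$ is a visibly pushdown language for each $i$, then the well-nested shuffle $L_1\bowtie\cdots\bowtie L_n$ is a visibly pushdown language over $\widetilde{\Sigma}$.
   Context: A visibly pushdown (VP) alphabet is a finite alphabet partitioned into calls, returns and internals; $\widetilde{\Sigma}$ has as calls/returns/internals the unions of those of the $\widetilde{\Sigma}_i$. A visibly pushdown automaton is a pushdown automaton with bottom symbol $\bot$ that pushes one non-$\bot$ symbol on each call, pops the top symbol on each return (reading $\bot$ on empty stack without removing it), and does not touch the stack on internals; a visibly pushdown language is one accepted by such an automaton. In a word, calls and returns are matched like opening and closing parentheses (internals ignored). A word over $\widetilde{\Sigma}$ is well-nested if every matched call–return pair consists of two letters from the same $\widetilde{\Sigma}_k$. The shuffle $L_1\parallel\cdots\parallel L_n$ is $\{w\in\widetilde{\Sigma}^*:\Pi_{\widetilde{\Sigma}_i}(w)\in L_i\text{ for all }i\}$, where $\Pi_{\widetilde{\Sigma}_i}$ erases letters not in $\widetilde{\Sigma}_i$; the well-nested shuffle $L_1\bowtie\cdots\bowtie L_n$ is the set of well-nested words in $L_1\parallel\cdots\parallel L_n$. *)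

(* Defs.v *)
From mathcomp Require Import all_boot.
Set Implicit Arguments. Unset Strict Implicit. Unset Printing Implicit Defensive.

(* A visibly pushdown alphabet: a finite type A with a partition of its
   letters into calls, returns and internals, given by [kind : A -> letter_kind]. *)
Inductive letter_kind := Call | Ret | Int.

(* The stack is a [seq G]
   (head = top); the empty stack represents the stack holding only the bottom
   symbol ⊥ (G contains only non-⊥ symbols).
   - dcall q a q' g : on call a in state q, go to q' and push g;
   - dret q a top q' : on return a in state q with top of stack [top]
     ([None] = ⊥, in which case nothing is popped), go to q' (and pop);
   - dint q a q' : on internal a, go to q', stack untouched. *)
Record VPA (A : Type) := {
  vQ : finType;
  vG : finType;
  vinit : pred vQ;
  vfinal : pred vQ;
  vcall : vQ -> A -> vQ -> vG -> bool;
  vret : vQ -> A -> option vG -> vQ -> bool;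
  vint : vQ -> A -> vQ -> bool }.

Section VPA_semantics.
Variables (A : Type) (kind : A -> letter_kind) (M : VPA A).

Definition vstep (q : vQ M) (st : seq (vG M)) (a : A)
    (q' : vQ M) (st' : seq (vG M)) : Prop :=
  match kind a with
  | Call => exists g, st' = g :: st /\ vcall q a q' g
  | Ret => match st with
           | [::] => st' = [::] /\ vret q a None q'
           | g :: s => st' = s /\ vret q a (Some g) q'
           end
  | Int => st' = st /\ vint q a q'
  end.

Inductive vrun : vQ M -> seq (vG M) -> seq A -> vQ M -> seq (vG M) -> Prop :=
  | vrun_nil q st : vrun q st [::] q st
  | vrun_cons q st a w q1 st1 q2 st2 :
      vstep q st a q1 st1 -> vrun q1 st1 w q2 st2 -> vrun q st (a :: w) q2 st2.

Definition vaccepts (w : seq A) : Prop :=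
  exists (q0 qf : vQ M) (st : seq (vG M)), @vinit A M q0 /\ vrun q0 [::] w qf st /\ @vfinal A M qf.
End VPA_semantics.

Definition is_VPL (A : Type) (kind : A -> letter_kind) (L : seq A -> Prop) : Prop :=
  exists M : VPA A, forall w, L w <-> vaccepts kind M w.

(* The combined alphabet Σ̃ is [Sigma] with [kind]; [comp a = k] says that the
   letter a belongs to the k-th sub-alphabet Σ̃_k (so the Σ̃_k are pairwise
   disjoint and their union is Σ̃). *)
Section Shuffle.
Variables (n : nat) (Sigma : finType) (kind : Sigma -> letter_kind)
  (comp : Sigma -> 'I_n).

Definition subalph (i : 'I_n) : Type := {a : Sigma | comp a == i}.

Definition sub_kind (i : 'I_n) (a : subalph i) : letter_kind := kind (sval a).

Definition proj (i : 'I_n) (w : seq Sigma) : seq (subalph i) :=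
  pmap (fun a : Sigma => match comp a =P i with
                         | ReflectT e => Some (exist _ a (introT eqP e))
                         | ReflectF _ => None end) w.

(* Well-nestedness: calls and returns are matched like parentheses (with a
   stack of pending calls); each matched call/return pair must be in the same
   sub-alphabet. Unmatched returns (empty stack) and pending calls are allowed. *)
Fixpoint wn_aux (st : seq Sigma) (w : seq Sigma) : bool :=
  match w with
  | [::] => true
  | a :: w' =>
      match kind a with
      | Call => wn_aux (a :: st) w'
      | Ret => match st with
               | [::] => wn_aux [::] w'
               | c :: st' => (comp c == comp a) && wn_aux st' w'
               end
      | Int => wn_aux st w'
      end
  end.

Definition well_nested (w : seq Sigma) : bool := wn_aux [::] w.

Definition shuffle (L : forall i : 'I_n, seq (subalph i) -> Prop) (w : seq Sigma) : Prop :=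
  forall i : 'I_n, L i (proj i w).

Definition wn_shuffle (L : forall i : 'I_n, seq (subalph i) -> Prop) (w : seq Sigma) : Prop :=
  well_nested w /\ shuffle L w.
End Shuffle.

(* Main.v *)
Require Import Defs.
From mathcomp Require Import all_boot.
From Stdlib Require Import IndefiniteDescription.
Unset Strict Implicit. Unset Printing Implicit Defensive.

Section Prod.
Variables (n : nat) (Sigma : finType) (kind : Sigma -> letter_kind)
  (comp : Sigma -> 'I_n) (M : forall i : 'I_n, VPA (subalph comp i)).

Definition lift (i : 'I_n) (a : Sigma) : option (subalph comp i) :=
  match comp a =P i with
  | ReflectT e => Some (exist _ a (introT eqP e))
  | ReflectF _ => None end.

Lemma projE i w : proj comp i w = pmap (lift i) w.
Proof. by []. Qed.

Lemma match_reflect (Pr : Prop) (b : bool) (r : reflect Pr b) (T : Type)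
  (f : Pr -> T) (x : T) (Q : T -> Prop) :
  (forall e, b -> Q (f e)) -> (~ Pr -> ~~ b -> Q x) ->
  Q (match r with ReflectT e => f e | ReflectF _ => x end).
Proof. by case: r => e; [move=> H _; apply: H | move=> _ H; apply: H]. Qed.

Definition liftf i a := fun e : comp a = i =>
  Some (exist (fun x : Sigma => comp x == i) a (introT (comp a =P i) e)).


Lemma liftE i a : lift i a = match comp a =P i with ReflectT e => liftf i a e | ReflectF _ => None end.
Proof. by []. Qed.

Lemma lift_None i a : comp a != i -> lift i a = None.
Proof.
move=> H; rewrite liftE.
apply (@match_reflect _ _ (comp a =P i) _ (liftf i a) None (fun o => o = None)) => //.
by move=> e; rewrite (negbTE H).
Qed.

Lemma lift_val i a a' : lift i a = Some a' -> sval a' = a /\ comp a = i.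
Proof.
rewrite liftE.
apply (@match_reflect _ _ (comp a =P i) _ (liftf i a) None (fun o => o = Some a' -> sval a' = a /\ comp a = i)) => //.
by move=> e _ [<-].
Qed.

Lemma lift_Some a : exists a', lift (comp a) a = Some a' /\ sval a' = a.
Proof.
case E: (lift (comp a) a) => [a'|]; first by exists a'; case: (lift_val _ _ _ E).
move: E; rewrite liftE.
apply (@match_reflect _ _ (comp a =P comp a) _ (liftf (comp a) a) None (fun o => o = None -> _)) => //.
Qed.

Definition PQ : finType := {dffun forall i : 'I_n, vQ (M i)}.
Definition PG : finType := {i : 'I_n & vG (M i)}.

Definition unch (j : 'I_n) (Q Q' : PQ) := [forall k, (k != j) ==> (Q' k == Q k)].

Definition pcall (Q : PQ) (a : Sigma) (Q' : PQ) (G : PG) : bool :=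
  let: existT k g := G in
  if lift k a is Some a' then @vcall _ (M k) (Q k) a' (Q' k) g && unch k Q Q' else false.

Definition pret (Q : PQ) (a : Sigma) (oG : option PG) (Q' : PQ) : bool :=
  match oG with
  | None => if lift (comp a) a is Some a' then
              @vret _ (M (comp a)) (Q (comp a)) a' None (Q' (comp a)) && unch (comp a) Q Q'
            else false
  | Some (existT k g) => if lift k a is Some a' then
              @vret _ (M k) (Q k) a' (Some g) (Q' k) && unch k Q Q' else false
  end.

Definition pint (Q : PQ) (a : Sigma) (Q' : PQ) : bool :=
  if lift (comp a) a is Some a' then
     @vint _ (M (comp a)) (Q (comp a)) a' (Q' (comp a)) && unch (comp a) Q Q'
  else false.

Definition P : VPA Sigma := {| vQ := PQ; vG := PG;
  vinit := fun Q => [forall k, @vinit _ (M k) (Q k)];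
  vfinal := fun Q => [forall k, @vfinal _ (M k) (Q k)];
  vcall := pcall; vret := pret; vint := pint |}.

Definition getj (j : 'I_n) (G : PG) : option (vG (M j)) :=
  let: existT k g := G in
  match k =P j with ReflectT e => Some (ecast k (vG (M k)) e g) | ReflectF _ => None end.

Arguments getj : simpl never.

Lemma getj_eq j g : getj j (existT _ j g) = Some g.
Proof. rewrite /getj; case: eqP => // e; by rewrite (eq_irrelevance e erefl). Qed.

Lemma getj_neq j k g : k != j -> getj j (existT _ k g) = None.
Proof. by rewrite /getj; case: eqP. Qed.

Definition projst j (ST : seq PG) := pmap (getj j) ST.

Definition upd (Q : PQ) (j : 'I_n) (x : vQ (M j)) : PQ :=
  [ffun k => match j =P k with ReflectT e => ecast k (vQ (M k)) e x | ReflectF _ => Q k end].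

Lemma upd_eq Q j x : upd Q j x j = x.
Proof. rewrite /upd ffunE; case: eqP => // e; by rewrite (eq_irrelevance e erefl). Qed.

Lemma upd_neq Q j x k : j != k -> upd Q j x k = Q k.
Proof. by move=> H; rewrite /upd ffunE; case: eqP => // e; rewrite e eqxx in H. Qed.

Lemma unch_upd Q j x : unch j Q (upd Q j x).
Proof. apply/forallP => k; apply/implyP => H; rewrite upd_neq // eq_sym //. Qed.


Lemma vrun_inv (A : Type) (kd : A -> letter_kind) (N : VPA A) q st a w q2 st2 :
  @vrun A kd N q st (a :: w) q2 st2 ->
  exists q1 st1, @vstep A kd N q st a q1 st1 /\ @vrun A kd N q1 st1 w q2 st2.
Proof. move=> H; inversion H; subst; by do 2 eexists; split; eauto. Qed.

Lemma proj_other i a w : comp a != i -> proj comp i (a :: w) = proj comp i w.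
Proof. by move=> H; rewrite projE /= lift_None. Qed.

Lemma proj_this a a' w : lift (comp a) a = Some a' ->
  proj comp (comp a) (a :: w) = a' :: proj comp (comp a) w.
Proof. by move=> H; rewrite projE /= H. Qed.

Lemma unchE j Q Q' i : unch j Q Q' -> i != j -> Q' i = Q i.
Proof. by move=> /forallP /(_ i) /implyP H /H /eqP. Qed.

Lemma projst_other i k g ST : k != i -> projst i (existT _ k g :: ST) = projst i ST.
Proof. by move=> H; rewrite /projst /= getj_neq. Qed.

Lemma projst_this k g ST : projst k (existT _ k g :: ST) = g :: projst k ST.
Proof. by rewrite /projst /= getj_eq. Qed.

Definition PP := P.

Lemma fwd w : forall Q ST Q' ST', @vrun _ kind P Q ST w Q' ST' ->
  forall st, map comp st = map (@tag _ _) ST ->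
  wn_aux kind comp st w /\ forall i, @vrun _ (@sub_kind n Sigma kind comp i) (M i)
     (Q i) (projst i ST) (proj comp i w) (Q' i) (projst i ST').
Proof.
move=> Q ST Q' ST' H; elim: H => {Q ST Q' ST' w} [Q ST | Q ST a w Q1 ST1 Q2 ST2 Hs Hr IH] st Hst.
  by split => // i; constructor.
have [a' [Ea' Va']] := lift_Some a.
have Hother : forall i, comp a != i -> unch (comp a) Q Q1 -> projst i ST1 = projst i ST ->
    @vrun _ (@sub_kind n Sigma kind comp i) (M i) (Q1 i) (projst i ST1) (proj comp i w) (Q2 i) (projst i ST2) ->
    @vrun _ (@sub_kind n Sigma kind comp i) (M i) (Q i) (projst i ST) (proj comp i (a :: w)) (Q2 i) (projst i ST2).
  move=> i ne U E R; rewrite proj_other // -E -(unchE _ _ _ i U) //; by rewrite eq_sym.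
move: Hs; rewrite /vstep; case Ka: (kind a).
- move=> [[k g] [EST HG]]; subst ST1.
  have ek : k = comp a.
    by move: HG; rewrite /= /pcall; case E: (lift k a) => [b|] //; case: (lift_val _ _ _ E).
  subst k; simpl in HG; rewrite Ea' in HG; case/andP: HG => HG U.
  have [IH1 IH2] : _ := IH (a :: st) ltac:(by rewrite /= Hst).
  split; first by rewrite /= Ka.
  move=> i; case: (eqVneq (comp a) i) => [<-|ne].
    rewrite (proj_this _ _ _ Ea'); apply: vrun_cons (IH2 (comp a)).
    rewrite /vstep /sub_kind Va' Ka; exists g; by rewrite projst_this.
  by apply: Hother => //; rewrite projst_other.
- destruct ST as [|[k g] ST].
    move=> [EST HG]; subst ST1; case: st Hst => // _.
    simpl in HG; rewrite Ea' in HG; case/andP: HG => HG U.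
    have [IH1 IH2] := IH [::] erefl.
    split; first by rewrite /= Ka.
    move=> i; case: (eqVneq (comp a) i) => [<-|ne]; last by apply: Hother.
    rewrite (proj_this _ _ _ Ea'); apply: vrun_cons (IH2 (comp a)).
    by rewrite /vstep /sub_kind Va' Ka.
  move=> [EST HG]; subst ST1.
  have ek : k = comp a.
    by move: HG; rewrite /= ; case E: (lift k a) => [b|] //; case: (lift_val _ _ _ E).
  subst k; simpl in HG; rewrite Ea' in HG; case/andP: HG => HG U.
  case: st Hst => // c st [Hc Hst].
  have [IH1 IH2] := IH st Hst.
  split; first by rewrite /= Ka Hc eqxx.
  move=> i; case: (eqVneq (comp a) i) => [<-|ne].
    rewrite (proj_this _ _ _ Ea'); apply: vrun_cons (IH2 (comp a)).
    by rewrite /vstep /sub_kind Va' Ka projst_this.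
  by apply: Hother => //; rewrite projst_other.
- move=> [EST HG]; subst ST1; simpl in HG; rewrite /pint Ea' in HG; case/andP: HG => HG U.
  have [IH1 IH2] := IH st Hst.
  split; first by rewrite /= Ka.
  move=> i; case: (eqVneq (comp a) i) => [<-|ne]; last by apply: Hother.
  rewrite (proj_this _ _ _ Ea'); apply: vrun_cons (IH2 (comp a)).
  by rewrite /vstep /sub_kind Va' Ka.
Qed.


Lemma vrun_nil_inv (A : Type) (kd : A -> letter_kind) (N : VPA A) q st q2 st2 :
  @vrun A kd N q st [::] q2 st2 -> q2 = q.
Proof. by move=> H; inversion H. Qed.

Lemma bwd w : forall (Q : PQ) (ST : seq PG) (st : seq Sigma), map comp st = map (@tag _ _) ST -> wn_aux kind comp st w ->
  (forall i, exists qf s, @vrun _ (@sub_kind n Sigma kind comp i) (M i)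
     (Q i) (projst i ST) (proj comp i w) qf s /\ @vfinal _ (M i) qf) ->
  exists Q' ST', @vrun _ kind P Q ST w Q' ST' /\ [forall k, @vfinal _ (M k) (Q' k)].
Proof.
elim: w => [|a w IH] Q ST st Hst Hwn H.
  exists Q, ST; split; first by constructor.
  apply/forallP => k; have [qf [s [R F]]] := H k.
  by rewrite -(vrun_nil_inv _ _ _ _ _ _ _ R).
have [a' [Ea' Va']] := lift_Some a.
have [qf [s [R F]]] := H (comp a).
rewrite (proj_this _ _ _ Ea') in R.
have [q1 [s1 [Hs R1]]] := vrun_inv _ _ _ _ _ _ _ _ _ R.
have Hnext : forall ST1, projst (comp a) ST1 = s1 ->
    (forall i, comp a != i -> projst i ST1 = projst i ST) ->
    forall i, exists qf s, @vrun _ (@sub_kind n Sigma kind comp i) (M i)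
     (upd Q (comp a) q1 i) (projst i ST1) (proj comp i w) qf s /\ @vfinal _ (M i) qf.
  move=> ST1 E1 E2 i; case: (eqVneq (comp a) i) => [<-|ne].
    by exists qf, s; rewrite upd_eq E1.
  have [qf' [s' [R' F']]] := H i; exists qf', s'.
  by rewrite upd_neq // E2 // -(proj_other i a w ne).
have Hstep : forall ST1 st1, map comp st1 = map (@tag _ _) ST1 -> wn_aux kind comp st1 w ->
    projst (comp a) ST1 = s1 ->
    (forall i, comp a != i -> projst i ST1 = projst i ST) ->
    @vstep _ kind P Q ST a (upd Q (comp a) q1) ST1 ->
    exists Q' ST', @vrun _ kind P Q ST (a :: w) Q' ST' /\ [forall k, @vfinal _ (M k) (Q' k)].
  move=> ST1 st1 H1 H2 E1 E2 Hv.
  have [Q' [ST' [R2 F2]]] := IH _ _ _ H1 H2 (Hnext ST1 E1 E2).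
  by exists Q', ST'; split => //; apply: vrun_cons Hv R2.
move: Hs Hwn; rewrite /vstep /sub_kind Va' /=; case Ka: (kind a).
- move=> [g [E1 HG]] Hwn.
  apply: (Hstep (existT _ (comp a) g :: ST) (a :: st)) => //.
  + by rewrite /= Hst.
  + by rewrite projst_this E1.
  + by move=> i ne; rewrite projst_other.
  + rewrite /vstep Ka; exists (existT _ (comp a) g); split => //.
    by rewrite /= Ea' upd_eq HG unch_upd.
- destruct ST as [|[k g] ST].
    case: st Hst => // _; move=> [E1 HG] Hwn.
    apply: (Hstep [::] [::]) => //.
    rewrite /vstep Ka; split => //.
    by rewrite /= Ea' upd_eq HG unch_upd.
  case: st Hst => // c st [Hc Hst].
  move=> + /andP [/eqP Hca Hwn].
  have ek : k = comp a by rewrite -Hc Hca.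
  clear Hc; subst k; rewrite projst_this => -[E1 HG].
  apply: (Hstep ST st) => //.
  + by move=> i ne; rewrite projst_other.
  + rewrite /vstep Ka; split => //.
    by rewrite /= Ea' upd_eq HG unch_upd.
- move=> [E1 HG] Hwn.
  apply: (Hstep ST st) => //.
  + rewrite /vstep Ka; split => //.
    by rewrite /= /pint Ea' upd_eq HG unch_upd.
Qed.

End Prod.

Theorem theorem4p2 (n : nat) (Sigma : finType) (kind : Sigma -> letter_kind)
    (comp : Sigma -> 'I_n)
    (L : forall i : 'I_n, seq (subalph comp i) -> Prop) :
  (forall i : 'I_n, is_VPL (sub_kind kind (comp:=comp) (i:=i)) (L i)) ->
  is_VPL kind (wn_shuffle kind L).
Proof.
move=> H.
pose M := fun i => proj1_sig (constructive_indefinite_description _ (H i)).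
have HM : forall i w, L i w <-> vaccepts (sub_kind kind (comp:=comp) (i:=i)) (M i) w.
  by move=> i; exact: (proj2_sig (constructive_indefinite_description _ (H i))).
exists (P n Sigma comp M) => w; split.
- move=> [WN SH].
  have A : forall i, exists q0, @vinit _ (M i) q0 /\ exists qf st,
      @vrun _ (sub_kind kind (comp:=comp) (i:=i)) (M i) q0 [::] (proj comp i w) qf st /\ @vfinal _ (M i) qf.
    move=> i; have [q0 [qf [st [I1 [R1 F1]]]]] := (proj1 (HM i _)) (SH i).
    by exists q0; split => //; exists qf, st.
  pose Q0 : PQ n Sigma comp M := finfun (fun i => proj1_sig (constructive_indefinite_description _ (A i))).
  have [Q' [ST' [R F]]] := @bwd n Sigma kind comp M w Q0 [::] [::] erefl WN
    ltac:(move=> i; rewrite /Q0 ffunE;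
          case: (proj2_sig (constructive_indefinite_description _ (A i))) => _ [qf [st [R F]]];
          by exists qf, st).
  exists Q0, Q', ST'; split; last by split.
  apply/forallP => k /=; rewrite /Q0 ffunE.
  by case: (proj2_sig (constructive_indefinite_description _ (A k))).
- move=> [Q0 [Qf [ST [I0 [R F]]]]].
  have [WN Rs] := @fwd n Sigma kind comp M w Q0 [::] Qf ST R [::] erefl.
  split => // i; apply/HM.
  exists (Q0 i), (Qf i), (projst n Sigma comp M i ST); split.
    by move/forallP: I0.
  split; first exact: Rs.
  by move/forallP: F.
Qed.
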